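(* Let $\gamma>1$. Consider states $(\rho,\rho v,\rho e)$ with $\rho>0$, $v=\rho v/\rho$, $p=(\gamma-1)\rho e$, together with a time-independent gravity potential value $\phi_i$ attached to each cell $i$ (treated as an extra state component). Consider the semi-discretization of $\partial_t\rho+\partial_x(\rho v)=0$, $\partial_t(\rho v)+\partial_x(\rho v^2+p)=-\rho\partial_x\phi$, $\partial_t(\rho e)+\partial_x(\rho ev+pv)-v\partial_xp=0$: $$\partial_t\rho_i+\frac{f^\rho_{i+1/2}-f^\rho_{i-1/2}}{\Delta x}=0,$$ $$\partial_t(\rho v)_i+\frac{f^{\rho v}_{i+1/2}-f^{\rho v}_{i-1/2}}{\Delta x}+\frac{\rho^{\mathrm{num}}_{i+1/2}[\![\phi]\!]_{i+1/2}+\rho^{\mathrm{num}}_{i-1/2}[\![\phi]\!]_{i-1/2}}{2\Delta x}=0,$$ $$\partial_t(\rho e)_i+\frac{f^{\rho e}_{i+1/2}-f^{\rho e}_{i-1/2}}{\Delta x}-\frac{v^{\mathrm{num}}_{i+1/2}[\![p]\!]_{i+1/2}+v^{\mathrm{num}}_{i-1/2}[\![p]\!]_{i-1/2}}{2\Delta x}=0,$$ with consistent two-point fluxes $f^\rho,f^{\rho v},f^{\rho e},\rho^{\mathrm{num}},v^{\mathrm{num}}$ (consistent with $\rho v$, $\rho v^2+p$, $\rho ev+pv$, $\rho$, $v$ respectively). If the fluxes satisfy the kinetic-energy-preserving conditions $$f^{\rho v}=\{\{v\}\}f^\rho+\{\{p\}\},\qquad f^\rho=\rho^{\mathrm{num}}\{\{v\}\},\qquad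 v^{\mathrm{num}}=\{\{v\}\},$$ (with the same $\rho^{\mathrm{num}}$ as in the gravity term), then the semi-discretization conserves the total energy $U=\rho e+\tfrac12\rho v^2+\rho\phi$, i.e., it is entropy-conservative for the pair $(U,F)$ with $F=(U+p)v$.
   Context: $\{\{a\}\}=\tfrac12(a_-+a_+)$, $[\![a]\!]=a_+-a_-$; subscript $i+1/2$ means evaluation at $(u_-,u_+)=(u_i,u_{i+1})$. The ''entropy variables'' of $U$ with respect to $(\rho,\rho v,\rho e)$ are $\omega=(-\tfrac12v^2+\phi,\ v,\ 1)$. Entropy-conservative for $(U,F)$ means: there exists a two-point $F^{\mathrm{num}}$ with $F^{\mathrm{num}}(u,u)=F(u)$ such that for all grid states and all $i$, $\omega(u_i)\cdot\partial_tu_i=-\frac{1}{\Delta x}(F^{\mathrm{num}}(u_i,u_{i+1})-F^{\mathrm{num}}(u_{i-1},u_i))$. *)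

(* Defs.v *)
From Stdlib Require Import Reals ZArith.
Open Scope R_scope.

(* A cell state (rho, rho v, rho e) together with the (time-independent)
   gravity potential value phi, treated as an extra state component. *)
Record state := mkState { rho : R; mom : R; ener : R; phi : R }.

Definition vel (u : state) : R := mom u / rho u.
Definition pres (gamma : R) (u : state) : R := (gamma - 1) * ener u.

Definition avg (a : state -> R) (um up : state) : R := (a um + a up) / 2.
Definition jump (a : state -> R) (um up : state) : R := a up - a um.

Definition Utot (u : state) : R :=
  ener u + / 2 * rho u * vel u ^ 2 + rho u * phi u.
Definition Fflux (gamma : R) (u : state) : R :=
  (Utot u + pres gamma u) * vel u.

(* entropy variables of U w.r.t. (rho, rho v, rho e) *)
Definition omega (u : state) : R * R * R :=
  (- / 2 * vel u ^ 2 + phi u, vel u, 1).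

Definition dot3 (a b : R * R * R) : R :=
  let '(a1, a2, a3) := a in let '(b1, b2, b3) := b in a1 * b1 + a2 * b2 + a3 * b3.

Definition two_point := state -> state -> R.

Definition semidisc (gamma : R) (frho fmom fener rhonum vnum : two_point)
  (dx : R) (u : Z -> state) (i : Z) : R * R * R :=
  let um := u (i - 1)%Z in let ui := u i in let up := u (i + 1)%Z in
  ( - (frho ui up - frho um ui) / dx,
    - (fmom ui up - fmom um ui) / dx
      - (rhonum ui up * jump phi ui up + rhonum um ui * jump phi um ui) / (2 * dx),
    - (fener ui up - fener um ui) / dx
      + (vnum ui up * jump (pres gamma) ui up + vnum um ui * jump (pres gamma) um ui)
          / (2 * dx) ).

Definition entropy_conservative (w : state -> R * R * R) (F : state -> R)
  (scheme : R -> (Z -> state) -> Z -> R * R * R) : Prop :=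
  exists Fnum : two_point,
    (forall u, 0 < rho u -> Fnum u u = F u) /\
    (forall (dx : R) (u : Z -> state), 0 < dx -> (forall j, 0 < rho (u j)) ->
       forall i : Z,
         dot3 (w (u i)) (scheme dx u i) =
         - (Fnum (u i) (u (i + 1)%Z) - Fnum (u (i - 1)%Z) (u i)) / dx).

(* Main.v *)
Require Import Defs.
From Stdlib Require Import Reals ZArith Lra.
Open Scope R_scope.

Theorem mainTheorem11 (gamma : R) (frho fmom fener rhonum vnum : two_point) :
  1 < gamma ->
  (* consistency of the two-point fluxes *)
  (forall u, 0 < rho u ->
     frho u u = mom u /\
     fmom u u = rho u * vel u ^ 2 + pres gamma u /\
     fener u u = ener u * vel u + pres gamma u * vel u /\
     rhonum u u = rho u /\
     vnum u u = vel u) ->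
  (* kinetic-energy-preserving conditions *)
  (forall um up, 0 < rho um -> 0 < rho up ->
     fmom um up = avg vel um up * frho um up + avg (pres gamma) um up /\
     frho um up = rhonum um up * avg vel um up /\
     vnum um up = avg vel um up) ->
  entropy_conservative omega (Fflux gamma)
    (semidisc gamma frho fmom fener rhonum vnum).
Proof.
  intros Hg Hc Hk.
  exists (fun a b => fener a b + frho a b * vel a * vel b / 2
     - (vel b - vel a) * (pres gamma b - pres gamma a) / 4
     + rhonum a b * (phi a * vel b + vel a * phi b) / 2).
  split.
  - intros u Hu. destruct (Hc u Hu) as (H1 & H2 & H3 & H4 & H5).
    cbv beta. rewrite H1, H3, H4. unfold Fflux, Utot.
    assert (mom u = rho u * vel u) as Hm by (unfold vel; field; lra).
    rewrite Hm. field.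
  - intros dx u Hdx Hpos i.
    destruct (Hk (u i) (u (i+1)%Z) (Hpos _) (Hpos _)) as (A1 & A2 & A3).
    destruct (Hk (u (i-1)%Z) (u i) (Hpos _) (Hpos _)) as (B1 & B2 & B3).
    unfold dot3, omega, semidisc, jump, avg in *.
    cbv beta. rewrite A1, B1, A3, B3. rewrite A2, B2.
    field. lra.
Qed.
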